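(* Let $T$ be a forest with no isolated vertices and no open twins. Then $T$ is an iso-unique Grundy total domination graph if and only if $\gamma_{gr}^{t}(T)=n(T)$, where $n(T)$ is the number of vertices of $T$.
   Context: For a graph $G$, $N(v)$ denotes the open neighborhood of $v$. A sequence $(v_1,\ldots,v_k)$ of distinct vertices is an open neighborhood sequence if $N(v_i)\setminus\bigcup_{j=1}^{i-1}N(v_j)\neq\emptyset$ for each $i\in[k]$. The Grundy total domination number $\gamma_{gr}^{t}(G)$ is the maximum length of an open neighborhood sequence; the vertex set of such a maximum-length sequence is a Grundy total dominating set. $G$ is an iso-unique Grundy total domination graph if for every two Grundy total dominating sets $A,B$ there is an automorphism $\phi$ of $G$ with $\phi(A)=B$. Two distinct vertices $u,v$ are open twins if $N(u)=N(v)$; a vertex is an open twin if it has an open twin partner. *)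

(* Defs.v *)
(* A finite simple graph is a symmetric irreflexive
   relation e on a finType T. *)
From mathcomp Require Import all_boot all_fingroup.
Set Implicit Arguments. Unset Strict Implicit. Unset Printing Implicit Defensive.

Section Graph.
Variables (T : finType) (e : rel T).

Definition nbhd (v : T) : {set T} := [set u | e v u].

Definition forest : Prop :=
  forall s : seq T, uniq s -> 3 <= size s -> ~~ path.cycle e s.

Definition no_isolated : Prop := forall v : T, exists u, e v u.

Definition no_open_twins : Prop := forall u v : T, nbhd u = nbhd v -> u = v.

Fixpoint ons_from (D : {set T}) (s : seq T) : bool :=
  match s with
  | [::] => true
  | v :: s' => (nbhd v :\: D != set0) && ons_from (D :|: nbhd v) s'
  end.

Definition ons (s : seq T) : bool := uniq s && ons_from set0 s.

(* Grundy total domination number: maximum length of an ons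
   (ons have distinct vertices so length <= #|T|) *)
Definition gtd : nat :=
  \max_(k < #|T|.+1 | [exists t : k.-tuple T, ons t]) k.

Definition gtd_set (A : {set T}) : Prop :=
  exists s : seq T, [/\ ons s, size s = gtd & A = [set x in s]].

Definition graph_aut (phi : {perm T}) : Prop :=
  forall x y : T, e (phi x) (phi y) = e x y.

Definition iso_unique : Prop :=
  forall A B : {set T}, gtd_set A -> gtd_set B ->
    exists phi : {perm T}, graph_aut phi /\ phi @: A = B.

End Graph.

(* Main.v *)
Require Import Defs.
From mathcomp Require Import all_boot all_fingroup.
From mathcomp Require Import zify.
Set Implicit Arguments. Unset Strict Implicit. Unset Printing Implicit Defensive.

Section Walk.
Variables (T : finType) (e : rel T).
Hypotheses (esym : symmetric e) (eirr : irreflexive e) (efor : forest e).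

Lemma no_nb_walk (g : nat -> T) :
  (forall n, e (g n) (g n.+1)) -> (forall n, g n != g n.+2) -> False.
Proof.
move=> ge gnb.
have key : forall d i, 0 < d -> g i = g (i + d) -> False.
  elim/ltn_ind=> d IH i d0 gid.
  pose s := mkseq (fun k => g (i + k)) d.
  have ss : size s = d by rewrite size_mkseq.
  case: (boolP (uniq s)) => [us | /(uniqPn (g 0)) [a [b [ab bs nab]]]]; last first.
    rewrite ss in bs.
    rewrite !nth_mkseq // in nab; last by lia.
    apply: (IH (b - a) _ (i + a)); first by lia.
      by lia.
    by rewrite nab; congr g; lia.
  have d3 : 3 <= d.
    case: d IH d0 gid {s ss us} => // [[|[|d]]] // _ _.
    - by rewrite addn1 => gi; have := ge i; rewrite -gi eirr.
    - by rewrite addn2 => gi; have := gnb i; rewrite -gi eqxx.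
  have := efor us; rewrite ss => /(_ d3) /negP; apply.
  rewrite (cycle_path (g 0)); apply/(pathP (g 0)) => k ks.
  rewrite ss in ks.
  case: k ks => [|k] ks /=.
    rewrite (last_nth (g 0)) /= ss.
    rewrite -[d in nth _ _ d](prednK ks) /= !nth_mkseq; try lia.
    rewrite addn0 gid.
    have -> : i + d = (i + d.-1).+1 by lia.
    exact: ge.
  rewrite !nth_mkseq //; last by lia.
  by rewrite addnS; apply: ge.
have : ~~ injectiveb (fun k : 'I_#|T|.+1 => g k).
  apply/negP => /injectiveP inj.
  by have := leq_card _ inj; rewrite card_ord ltnn.
case/injectivePn => a [b ab gab].
case: (ltngtP a b) => [lab|lab|eab]; last by move: ab; rewrite (val_inj eab) eqxx.
  by apply: (key (b - a) a); [lia | rewrite gab; congr g; lia].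
by apply: (key (a - b) b); [lia | rewrite -gab; congr g; lia].
Qed.

Lemma no_state (P : rel T) :
  (forall a b, P a b -> e a b) ->
  (forall a b, P a b -> exists c, [&& e b c, c != a & P b c]) ->
  forall a b, ~~ P a b.
Proof.
move=> Pe Pn a0 b0; apply/negP => P0.
pose next (p : T * T) : T * T :=
  if [pick c | [&& e p.2 c, c != p.1 & P p.2 c]] is Some c then (p.2, c) else p.
pose it n := iter n next (a0, b0).
have inv : forall n, P (it n).1 (it n).2.
  elim=> [|n IH] //=; rewrite /next.
  case: pickP => [c /and3P [_ _ ->] //|/= none].
  by have [c /and3P [x y z]] := Pn _ _ IH; have := none c; rewrite x y z.
have step : forall n, [/\ (it n.+1).1 = (it n).2, e (it n).2 (it n.+1).2
                        & (it n.+1).2 != (it n).1].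
  move=> n; rewrite /= /next -/(it n).
  case: pickP => [c /and3P [x y _] //|none].
  by have [c /and3P [x y z]] := Pn _ _ (inv n); have := none c; rewrite x y z.
apply: (@no_nb_walk (fun n => (it n).1)) => n.
  by have [-> _ _] := step n; apply: Pe; apply: inv.
have [-> _ _] := step n.+1; have [_ _ ne] := step n; by rewrite eq_sym.
Qed.
End Walk.


Section Good.
Variables (T : finType) (e : rel T).

Definition goodb (S : {set T}) : bool :=
  [exists f : {ffun T -> T}, [forall v in S, e v (f v)] &&
     [forall v in S, forall w in S, (f v == f w) ==> (v == w)]].

Lemma goodP (S : {set T}) : reflect (exists f : T -> T,
   (forall v, v \in S -> e v (f v)) /\ {in S &, injective f}) (goodb S).
Proof.
apply: (iffP existsP) => [[f /andP [/forall_inP H1 /forall_inP H2]]|[f [H1 H2]]].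
  exists f; split=> // v w vS wS fvw.
  by have /forall_inP /(_ w wS) /implyP /(_ (introT eqP fvw)) /eqP := H2 v vS.
exists (finfun f); apply/andP; split; apply/forall_inP => v vS; rewrite ?ffunE.
  exact: H1.
apply/forall_inP => w wS; rewrite !ffunE; apply/implyP => /eqP fvw.
by rewrite (H2 v w vS wS fvw).
Qed.

Lemma in_nbhd v u : (u \in nbhd e v) = e v u.
Proof. by rewrite inE. Qed.

Lemma ons_from_foot D s : ons_from e D s -> exists f : T -> T,
  (forall v, v \in s -> e v (f v) && (f v \notin D)) /\ {in s &, injective f}.
Proof.
elim: s D => [|v s IH] D /=.
  by move=> _; exists id; split.
case/andP => /set0Pn [x]; rewrite in_setD => /andP [xD xv] /IH [f [H1 H2]].
exists (fun u => if u == v then x else f u); split.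
  move=> u; rewrite in_cons; case: eqP => [-> _|uv /= us].
    by rewrite -in_nbhd xv xD.
  by case/andP: (H1 u us) => -> /=; rewrite in_setU negb_or => /andP [].
move=> u w; rewrite !in_cons.
case: (eqVneq u v) => [->|uv]; case: (eqVneq w v) => [->|wv] //= us ws.
- move=> xfw; case/andP: (H1 w ws) => _; rewrite -xfw in_setU.
  by rewrite xv orbT.
- move=> fux; case/andP: (H1 u us) => _; rewrite fux in_setU.
  by rewrite xv orbT.
- exact: H2.
Qed.

Lemma ons_good s : ons e s -> goodb [set x in s].
Proof.
case/andP => _ /ons_from_foot [f [H1 H2]]; apply/goodP; exists f; split.
  by move=> v; rewrite inE => /H1 /andP [].
by move=> v w; rewrite !inE; apply: H2.
Qed.

Lemma ons_from_rcons D s v : ons_from e D (rcons s v) =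
  ons_from e D s && (nbhd e v :\: (D :|: \bigcup_(u <- s) nbhd e u) != set0).
Proof.
elim: s D => [|u s IH] D /=.
  by rewrite big_nil setU0 andbT.
by rewrite IH big_cons setUA andbA.
Qed.

Hypotheses (esy : symmetric e) (eirr : irreflexive e) (efor : forest e).

Lemma good_ons (S : {set T}) : goodb S -> exists s, ons e s /\ [set x in s] = S.
Proof.
move Hn: #|S| => n; elim: n S Hn => [|n IH] S Hn gS.
  exists [::]; split=> //; apply/setP => x; rewrite inE in_nil; apply/esym; apply/negbTE; apply/negP => xS.
  by move: Hn; rewrite (cardD1 x) xS.
case/goodP: (gS) => f [H1 H2].
have [v vS vlast] : exists2 v, v \in S & forall w, w \in S -> w != v -> ~~ e w (f v).
  case: (boolP [exists v in S, [forall w in S, (w != v) ==> ~~ e w (f v)]]).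
    case/exists_inP => v vS /forall_inP H; exists v => // w wS wv.
    by have /implyP := H w wS; apply.
  rewrite negb_exists_in => /forall_inP Hn'.
  have ne : forall v, v \in S -> exists w, [&& w \in S, w != v & e w (f v)].
    move=> v vS; have := Hn' v vS; rewrite negb_forall_in => /exists_inP [w wS].
    by rewrite negb_imply negbK => /andP [wv ew]; exists w; rewrite wS wv ew.
  pose P a b := ((a \in S) && (b == f a)) || [&& b \in S, a != f b & e a b].
  have : S != set0 by rewrite -card_gt0 Hn.
  case/set0Pn => v vS; exfalso.
  have := @no_state T e eirr efor P _ _ v (f v).
  rewrite /P vS eqxx /= => H; suff : false by []; apply: H.
    by move=> a b /orP [/andP [aS /eqP ->]|/and3P [_ _ ->]] //; apply: H1.
  move=> a b /orP [/andP [aS /eqP ->]|/and3P [bS ab eab]].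
    have [w /and3P [wS wa ew]] := ne a aS.
    exists w; rewrite esy ew wa /= wS /=.
    apply/orP; right; rewrite ?andbT; apply/negP => /eqP faw.
    by have aw := H2 a w aS wS faw; rewrite aw eqxx in wa.
  exists (f b); rewrite H1 //= eq_sym ab /= bS eqxx //.
have gS' : goodb (S :\ v).
  apply/goodP; exists f; split.
    by move=> w; rewrite in_setD1 => /andP [_]; apply: H1.
  by move=> w u; rewrite !in_setD1 => /andP [_ wS] /andP [_ uS]; apply: H2.
have Hn2 : #|S :\ v| = n by move: Hn; rewrite (cardsD1 v S) vS; case.
have [s' [os' ss']] := IH (S :\ v) Hn2 gS'.
have vs' : v \notin s' by have := setD11 v S; rewrite -ss' inE => ->.
exists (rcons s' v); split.
  case/andP: os' => us' os'.
  rewrite /ons rcons_uniq vs' us' /= ons_from_rcons os' /=.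
  apply/set0Pn; exists (f v); rewrite in_setD in_nbhd H1 // andbT.
  rewrite set0U bigcup_seq; apply/negP => /bigcupP [u us]; rewrite in_nbhd => euf.
  have : u \in S :\ v by rewrite -ss' inE.
  rewrite in_setD1 => /andP [uv uS].
  by have := vlast u uS uv; rewrite euf.
apply/setP => x; rewrite inE mem_rcons in_cons.
case: eqP => [->|xv] //=.
have := in_setD1 x S v; rewrite -ss' inE => ->.
by case: eqP.
Qed.
End Good.


Section Main.
Variables (T : finType) (e : rel T).
Hypotheses (esy : symmetric e) (eirr : irreflexive e) (efor : forest e)
  (eiso : no_isolated e) (etw : no_open_twins e).

Lemma card_set_uniq (s : seq T) : uniq s -> #|[set x in s]| = size s.
Proof. by move=> us; rewrite cardsE; apply/card_uniqP. Qed.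

Lemma ons_size s : ons e s -> size s <= gtd e.
Proof.
move=> os; have sT : size s < #|T|.+1.
  by case/andP: os => us _; rewrite ltnS -(card_uniqP us) max_card.
rewrite /gtd; have := @leq_bigmax_cond _ (fun k : 'I_#|T|.+1 => [exists t : k.-tuple T, ons e t])
  (fun k => nat_of_ord k) (Ordinal sT); apply.
by apply/existsP; exists (in_tuple s).
Qed.

Lemma gtd_attained : exists s, ons e s /\ size s = gtd e.
Proof.
rewrite /gtd (@bigmax_eq_arg _ ord0); last by apply/existsP; exists [tuple].
case: arg_maxnP => [|k /existsP [t ot] _]; first by apply/existsP; exists [tuple].
by exists t; split=> //; rewrite size_tuple.
Qed.

Lemma good_le S : goodb e S -> #|S| <= gtd e.
Proof.
case/(good_ons esy eirr efor) => s [os <-].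
by case/andP: (os) => us _; rewrite card_set_uniq //; apply: ons_size.
Qed.

Definition mgood S := goodb e S && (#|S| == gtd e).

Lemma mgood_exists : exists S, mgood S.
Proof.
have [s [os ss]] := gtd_attained; exists [set x in s].
by rewrite /mgood ons_good //= card_set_uniq ?ss //; case/andP: os.
Qed.

Lemma gtd_setP A : gtd_set e A <-> mgood A.
Proof.
split.
  case=> s [os ss ->]; rewrite /mgood ons_good //=.
  by rewrite card_set_uniq ?ss //; case/andP: os.
case/andP => gA /eqP cA; have [s [os ss]] := good_ons esy eirr efor gA.
exists s; split=> //.
by rewrite -cA -ss card_set_uniq //; case/andP: os.
Qed.

Lemma exchange S w x : mgood S -> w \notin S -> e w x ->
  exists2 y, y \in S & e y x /\ mgood (w |: (S :\ y)).
Proof.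
case/andP => /goodP [f [H1 H2]] /eqP cS wS ewx.
pose f' v := if v == w then x else f v.
case: (boolP [exists y in S, f y == x]) => [/exists_inP [y yS /eqP fy]|none].
  have yw : y != w by apply: contraNneq wS => <-.
  exists y => //; split; first by rewrite -fy H1.
  rewrite /mgood; apply/andP; split; last first.
    rewrite cardsU1 in_setD1 (negbTE wS) andbF /= (cardsD1 y S) yS in cS *.
    have : 0 < #|S| by rewrite (cardD1 y) yS.
    by rewrite cS; lia.
  apply/goodP; exists f'; split.
    move=> v; rewrite in_setU1 in_setD1 /f'.
    by case: eqP => [->|_] //= /andP [_]; apply: H1.
  move=> u v; rewrite !in_setU1 !in_setD1 /f'.
  case: (eqVneq u w) => [->|uw]; case: (eqVneq v w) => [->|vw] //=.
  - move=> _ /andP [vy vS]; rewrite -fy => /(H2 _ _ yS vS) yv.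
    by rewrite yv eqxx in vy.
  - move=> /andP [uy uS] _; rewrite -fy => /(H2 _ _ uS yS) uy'.
    by rewrite uy' ?eqxx in uy.
  - by move=> /andP [_ uS] /andP [_ vS]; apply: H2.
exfalso.
have : goodb e (w |: S).
  apply/goodP; exists f'; split.
    move=> v; rewrite in_setU1 /f'.
    by case: eqP => [->|_] //= ; apply: H1.
  move=> u v; rewrite !in_setU1 /f'.
  case: (eqVneq u w) => [->|uw]; case: (eqVneq v w) => [->|vw] //=.
  - move=> _ vS fvx; move: none; rewrite negb_exists_in => /forall_inP /(_ v vS).
    by rewrite fvx eqxx.
  - move=> uS _ fux; move: none; rewrite negb_exists_in => /forall_inP /(_ u uS).
    by rewrite fux eqxx.
  - by apply: H2.
move/good_le; rewrite cardsU1 wS cS; lia.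
Qed.

Definition leaf v := #|nbhd e v| == 1.

Lemma claim1 : exists S, mgood S && [forall v, leaf v ==> (v \in S)].
Proof.
have [S0 mS0] := mgood_exists.
pose L := [set v | leaf v].
case: (@arg_maxnP _ S0 mgood (fun S => #|S :&: L|) mS0) => S mS Smax.
exists S; rewrite mS /=; apply/forallP => l; apply/implyP => ll.
apply/negPn/negP => lS.
have [s ns] : exists s, nbhd e l = [set s] by apply/cards1P; exact: ll.
have els : e l s by rewrite -in_nbhd ns set11.
have [y yS [eys mS']] := exchange mS lS els.
have ynl : ~~ leaf y.
  apply/negP => /cards1P [s' ns']; have : s \in nbhd e y by rewrite in_nbhd.
  rewrite ns' in_set1 => /eqP ss'; subst s'.
  have yl : y = l by apply: etw; rewrite ns ns'.
  by move: yS; rewrite yl (negbTE lS).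
have := Smax _ mS'.
have : S :&: L \proper (l |: (S :\ y)) :&: L.
  apply/properP; split.
    apply/subsetP => v; rewrite !inE => /andP [vS vl].
    rewrite vS vl andbT orbC /= andbT; apply/orP; left; apply/negP => /eqP vy.
    by move: vl; rewrite vy (negbTE ynl).
  by exists l; rewrite !inE ?eqxx ?ll ?(negbTE lS).
move/proper_card; lia.
Qed.

Lemma claim2 : gtd e < #|T| -> exists S, mgood S && [exists v, leaf v && (v \notin S)].
Proof.
move=> lt.
case: (boolP [exists S, mgood S && [exists v, leaf v && (v \notin S)]]).
  by case/existsP => S H; exists S.
rewrite negb_exists => /forallP Hc; exfalso.
have Hl : forall S v, mgood S -> v \notin S -> ~~ leaf v.
  move=> S v mS vS; apply/negP => lv; have := Hc S.
  by rewrite mS /=; apply/negP/negPn/existsP; exists v; rewrite lv vS.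
pose P a b := ([exists S, mgood S && (a \notin S)] && e a b) ||
              ([exists S, mgood S && (b \notin S)] && e a b).
have [S0 mS0] := mgood_exists.
have [w wS0] : exists w, w \notin S0.
  apply/existsP; rewrite -negb_forall; apply/negP => /forallP all.
  have : S0 = setT by apply/setP => v; rewrite inE all.
  by move/andP: mS0 => [_ /eqP]; move=> c Hs; rewrite Hs cardsT in c; lia.
have [x ewx] := eiso w.
suff : ~~ P w x.
  by rewrite /P ewx !andbT negb_or => /andP [/existsPn /(_ S0)]; rewrite mS0 wS0.
apply: (@no_state T e eirr efor P).
  by move=> a b /orP [/andP [_ ->]|/andP [_ ->]].
move=> a b /orP [/andP [/existsP [S /andP [mS aS]] eab]|/andP [/existsP [S /andP [mS bS]] eab]].
  have [y yS [eyb mS']] := exchange mS aS eab.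
  have ya : y != a by apply: contraNneq aS => <-.
  exists y; rewrite esy eyb ya /= /P esy eyb !andbT; apply/orP; right.
  apply/existsP; exists (a |: (S :\ y)); rewrite mS' /= !inE eqxx negb_or ya /=.
  by [].
have nl := Hl S b mS bS.
have ab : a \in nbhd e b by rewrite in_nbhd esy.
have : nbhd e b :\ a != set0.
  rewrite -card_gt0; move: nl; rewrite /leaf (cardsD1 a) ab /=; lia.
case/set0Pn => c; rewrite in_setD1 in_nbhd => /andP [ca ebc].
exists c; rewrite ebc ca /= /P ebc !andbT; apply/orP; left.
by apply/existsP; exists S; rewrite mS bS.
Qed.
End Main.

Unset Implicit Arguments.

Theorem theorem5p6 (T : finType) (e : rel T) :
  symmetric e -> irreflexive e ->
  forest e -> no_isolated e -> no_open_twins e ->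
  iso_unique e <-> gtd e = #|T|.
Proof.
move=> esy eirr efor eiso etw.
have gle : gtd e <= #|T|.
  have [s [os <-]] := gtd_attained e.
  by case/andP: os => us _; rewrite -(card_uniqP us) max_card.
split; last first.
  move=> gT A B /(gtd_setP esy eirr efor) /andP [_ /eqP cA]
                /(gtd_setP esy eirr efor) /andP [_ /eqP cB].
  have full : forall C : {set T}, #|C| = #|T| -> C = setT.
    move=> C cC; apply/eqP; rewrite eqEcard cardsT cC leqnn andbT; by apply/subsetP => x; rewrite in_setT.
  exists 1%g; split; first by move=> x y; rewrite !perm1.
  have -> : A = setT by apply: full; rewrite cA gT.
  have -> : B = setT by apply: full; rewrite cB gT.
  by apply/setP => x; rewrite inE; apply/imsetP; exists x; rewrite ?inE ?perm1.
move=> iso; apply/eqP; rewrite eqn_leq gle /=; rewrite leqNgt; apply/negP => lt.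
have [A /andP [mA /forallP Aall]] := claim1 esy eirr efor etw.
have [B /andP [mB /existsP [l /andP [ll lB]]]] := claim2 esy eirr efor eiso lt.
have [phi [aut phiAB]] := iso A B (proj2 (gtd_setP esy eirr efor A) mA)
                                  (proj2 (gtd_setP esy eirr efor B) mB).
pose l' := (phi^-1)%g l.
have ph : phi l' = l by rewrite /l' permKV.
have nb : forall v, nbhd e v = phi @^-1: nbhd e (phi v).
  by move=> v; apply/setP => u; rewrite !inE aut.
have ll' : leaf e l'.
  by rewrite /leaf nb card_preimset ?ph //; apply: perm_inj.
have : l' \in A by have /implyP := Aall l'; apply.
move=> l'A; have : phi l' \in B by rewrite -phiAB; apply/imsetP; exists l'.
by rewrite ph (negbTE lB).
Qed.
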